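(* Let $A\in {\operatorname{\mathsf{TPD}}}_n(\mathbb{S}_{\max}^\vee)$, set $\gamma_i=a_{ii}$ ordered so that $\gamma_1\succeq\cdots\succeq\gamma_n$, let $\gamma=\gamma_k$ and $B=B_k=\gamma_k I\ominus A$. Assume there exists a column $j$ of $B^\mathrm{adj}$ which is in $(\mathbb{S}_{\max}^\vee)^n\setminus \{\mathbf{0}\}$. Then, $j=k$, and any $\mathbb{S}_{\max}$-eigenvector is a multiple of $B^\mathrm{adj}_{:,j}$ and $\gamma$ is a simple (algebraic) $\mathbb{S}_{\max}$-eigenvalue of $A$.
   Context: $\mathbb{S}_{\max}$ is the symmetrized tropical semiring over a divisible totally ordered abelian group, with zero $\mathbf{0}$, unit $\mathbf{1}$, minus $\ominus$; $\mathbb{S}_{\max}^\vee$ is the set of signed elements; $a\,\nabla\, b$ iff $a\ominus b$ is balanced; $a\preceq b$ iff $b=a\oplus b$. $A\in{\operatorname{\mathsf{TPD}}}_n(\mathbb{S}_{\max}^\vee)$: $A$ symmetric with signed entries, $\mathbf{0}<a_{ii}$ and $a_{ij}^2<a_{ii}a_{jj}$ for $i\ne j$ (where $a<b$ iff $b\ominus a$ is positive). Its $\mathbb{S}_{\max}$-eigenvalues are its diagonal entries (simple if occurring once). $(M^{\mathrm{adj}})_{ij}=(\ominus\mathbf{1})^{i+j}\det M[\hat j,\hat i]$ (signed determinant), $M_{:,j}$ the $j$-th column. An $\mathbb{S}_{\max}$-eigenvector associated to $\gamma$ is $v\in(\mathbb{S}_{\max}^\vee)^n\setminus\{\mathbf{0}\}$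 with $Av\,\nabla\,\gamma v$. *)

(* Defs.v *)
From HB Require Import structures.
From mathcomp Require Import all_boot all_order all_algebra all_fingroup.
Set Implicit Arguments. Unset Strict Implicit. Unset Printing Implicit Defensive.
Import Order.TTheory GRing.Theory Num.Theory.
Local Open Scope ring_scope.

Definition divisible_toag (G : porderZmodType) : Prop :=
  [/\ (forall x y : G, (x <= y) || (y <= x)),
      (forall x y z : G, x <= y -> x + z <= y + z) &
      (forall (m : nat) (x : G), (0 < m)%N -> exists y : G, y *+ m = x)].

Inductive tsign := sPos | sNeg | sBal.

(* S_max = {0} ∪ (G × {+,-,•}); None is the zero 𝟘 (= -oo) *)
Definition Smax (G : porderZmodType) := option (G * tsign).

Section Smax.
Variable G : porderZmodType.
Local Notation S := (Smax G).

Definition szero : S := None.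
Definition sone : S := Some (0, sPos).

Definition sign_mul (s t : tsign) : tsign :=
  match s, t with
  | sBal, _ | _, sBal => sBal
  | sPos, t => t
  | sNeg, sPos => sNeg
  | sNeg, sNeg => sPos
  end.

Definition sign_opp (s : tsign) : tsign :=
  match s with sPos => sNeg | sNeg => sPos | sBal => sBal end.

Definition sign_eqb (s t : tsign) : bool :=
  match s, t with
  | sPos, sPos | sNeg, sNeg | sBal, sBal => true | _, _ => false end.

Definition sadd (x y : S) : S :=
  match x, y with
  | None, _ => y
  | _, None => x
  | Some (a, s), Some (b, t) =>
      if a < b then y else if b < a then x
      else if sign_eqb s t then x else Some (a, sBal)
  end.

Definition smul (x y : S) : S :=
  match x, y with
  | Some (a, s), Some (b, t) => Some (a + b, sign_mul s t)
  | _, _ => None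
  end.

Definition sopp (x : S) : S :=
  match x with None => None | Some (a, s) => Some (a, sign_opp s) end.

Definition ssub (x y : S) : S := sadd x (sopp y).

Definition signed (x : S) : Prop :=
  match x with None => True | Some (_, s) => s <> sBal end.

Definition balanced (x : S) : Prop := sopp x = x.

Definition spositive (x : S) : Prop :=
  match x with Some (_, sPos) => True | _ => False end.

Definition sbal (x y : S) : Prop := balanced (ssub x y).
Definition sle (x y : S) : Prop := y = sadd x y.
Definition slt (x y : S) : Prop := spositive (ssub y x).

Definition ssign_pow (m : nat) : S := if odd m then sopp sone else sone.

Definition sbig_add (I : finType) (F : I -> S) : S := \big[sadd/szero]_(i : I) F i.
Definition sbig_mul (I : finType) (F : I -> S) : S := \big[smul/sone]_(i : I) F i.

Definition sdet (m : nat) (M : 'M[S]_m) : S :=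
  sbig_add (fun s : 'S_m =>
    smul (ssign_pow (odd_perm s)) (sbig_mul (fun i => M i (s i)))).

Definition sadj (m : nat) (M : 'M[S]_m.+1) : 'M[S]_m.+1 :=
  \matrix_(i, j) smul (ssign_pow (nat_of_ord i + nat_of_ord j)%N) (sdet (row' j (col' i M))).

Definition sshift (m : nat) (g : S) (A : 'M[S]_m) : 'M[S]_m :=
  \matrix_(i, j) ssub (if i == j then g else szero) (A i j).

Definition smulmxv (m : nat) (A : 'M[S]_m) (v : 'I_m -> S) : 'I_m -> S :=
  fun i => sbig_add (fun j => smul (A i j) (v j)).

Definition signed_vec (m : nat) (v : 'I_m -> S) : Prop := forall i, signed (v i).
Definition nonzero_vec (m : nat) (v : 'I_m -> S) : Prop := exists i, v i <> szero.

Definition TPD (m : nat) (A : 'M[S]_m) : Prop :=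
  [/\ (forall i j, A i j = A j i),
      (forall i j, signed (A i j)),
      (forall i, slt szero (A i i)) &
      (forall i j, i != j -> slt (smul (A i j) (A i j)) (smul (A i i) (A j j)))].

Definition seigenvector (m : nat) (A : 'M[S]_m) (g : S) (v : 'I_m -> S) : Prop :=
  [/\ signed_vec v, nonzero_vec v & forall i, sbal (smulmxv A v i) (smul g (v i))].

(* For A ∈ TPD, the S_max-eigenvalues are the diagonal entries, with
   (algebraic) multiplicity the number of occurrences; simple = occurs once *)
Definition simple_eigenvalue_TPD (m : nat) (A : 'M[S]_m) (g : S) : Prop :=
  exists k, A k k = g /\ forall i, A i i = g -> i = k.

End Smax.

(* Main.v *)
Require Import Defs.
From HB Require Import structures.
From mathcomp Require Import all_boot all_order all_algebra all_fingroup.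
From mathcomp Require Import zify.
Import Order.TTheory GRing.Theory Num.Theory.
Set Implicit Arguments. Unset Strict Implicit. Unset Printing Implicit Defensive.
Local Open Scope ring_scope.

Section Basic.
Variable G : porderZmodType.
Hypothesis HG : divisible_toag G.
Local Notation S := (Smax G).

Lemma gtot (x y : G) : (x <= y) || (y <= x).
Proof. by case: HG. Qed.

Lemma gtri (x y : G) : x < y \/ x = y \/ y < x.
Proof.
case/orP: (gtot x y) => h; rewrite le_eqVlt in h; case/orP: h => h.
- by right; left; apply/eqP.
- by left.
- by right; left; apply/esym/eqP.
- by right; right.
Qed.

Lemma leD2r (x y z : G) : x <= y -> x + z <= y + z.
Proof. by case: HG => _ h _; apply: h. Qed.

Lemma ltD2r (x y z : G) : x < y -> x + z < y + z.
Proof.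
rewrite !lt_neqAle => /andP[ne le]; rewrite leD2r // andbT.
by apply: contra ne => /eqP/addIr ->.
Qed.

Lemma ltD2l (x y z : G) : x < y -> z + x < z + y.
Proof. by rewrite ![z + _]addrC; apply: ltD2r. Qed.
Lemma leD2l (x y z : G) : x <= y -> z + x <= z + y.
Proof. by rewrite ![z + _]addrC; apply: leD2r. Qed.

Lemma leD (a b c d : G) : a <= b -> c <= d -> a + c <= b + d.
Proof. move=> h1 h2; apply: le_trans (leD2r c h1) (leD2l b h2). Qed.
Lemma ltD_le (a b c d : G) : a < b -> c <= d -> a + c < b + d.
Proof. move=> h1 h2; apply: lt_le_trans (ltD2r c h1) (leD2l b h2). Qed.
Lemma leD_lt (a b c d : G) : a <= b -> c < d -> a + c < b + d.
Proof. move=> h1 h2; apply: le_lt_trans (leD2r c h1) (ltD2l b h2). Qed.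

Lemma lt_ngt (x y : G) : x < y -> (y < x) = false.
Proof. by move=> h; apply/negbTE; rewrite lt_gtF. Qed.

Lemma ltNge (x y : G) : (x < y) = ~~ (y <= x).
Proof.
case: (gtri x y) => [h|[->|h]]; first by rewrite h lt_geF.
  by rewrite ltxx lexx.
by rewrite (lt_ngt h) (ltW h).
Qed.

Lemma lt2 (x y : G) : x *+ 2 < y *+ 2 -> x < y.
Proof.
move=> h; rewrite ltNge; apply/negP => le.
have := leD le le; rewrite -!mulr2n => h2.
by move: (lt_le_trans h h2); rewrite ltxx.
Qed.

End Basic.

Section Sadd.
Variable G : porderZmodType.
Hypothesis HG : divisible_toag G.
Local Notation S := (Smax G).

Ltac simp_lt := repeat (rewrite ?ltxx; match goal with
  | H : is_true (?a < ?b) |- context [?a < ?b] => rewrite H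
  | H : is_true (?a < ?b) |- context [?b < ?a] => rewrite (lt_ngt H)
  end); rewrite ?ltxx.

Lemma sadd0l (x : S) : sadd (szero G) x = x. Proof. by []. Qed.
Lemma sadd0r (x : S) : sadd x (szero G) = x. Proof. by case: x => [[]|]. Qed.

Lemma saddC (x y : S) : sadd x y = sadd y x.
Proof.
case: x y => [[a s]|] [[b t]|] //=.
case: (gtri HG a b) => [h|[<-|h]]; simp_lt => //.
by case: s; case: t.
Qed.

Lemma saddA (x y z : S) : sadd x (sadd y z) = sadd (sadd x y) z.
Proof.
case: x => [[a s]|] //; case: y => [[b t]|]; last by rewrite sadd0r.
case: z => [[c u]|]; last by rewrite !sadd0r.
case: (gtri HG a b) => [h1|[e1|h1]]; case: (gtri HG b c) => [h2|[e2|h2]];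
  case: (gtri HG a c) => [h3|[e3|h3]]; subst => //=;
  try (by move: (lt_trans h1 h2); rewrite ?ltxx ?(lt_ngt h3));
  try (by move: (lt_trans h2 h1); rewrite ?ltxx ?(lt_ngt h3));
  try (by move: h1; rewrite ?ltxx ?(lt_ngt h2) ?(lt_ngt h3));
  try (by move: h2; rewrite ?ltxx ?(lt_ngt h1) ?(lt_ngt h3));
  try (by move: h3; rewrite ?ltxx ?(lt_ngt h1) ?(lt_ngt h2));
  simp_lt => //=;
  try (case: s; case: t; case: u => /=; simp_lt => //).
Qed.

End Sadd.

Section Smul.
Variable G : porderZmodType.
Local Notation S := (Smax G).

Lemma sign_mulC s t : sign_mul s t = sign_mul t s.
Proof. by case: s; case: t. Qed.
Lemma sign_mulA s t u : sign_mul s (sign_mul t u) = sign_mul (sign_mul s t) u.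
Proof. by case: s; case: t; case: u. Qed.

Lemma smulC (x y : S) : smul x y = smul y x.
Proof. by case: x y => [[a s]|] [[b t]|] //=; rewrite addrC sign_mulC. Qed.
Lemma smulA (x y z : S) : smul x (smul y z) = smul (smul x y) z.
Proof. by case: x y z => [[a s]|] [[b t]|] [[c u]|] //=; rewrite addrA sign_mulA. Qed.
Lemma smul1l (x : S) : smul (sone G) x = x.
Proof. by case: x => [[a s]|] //=; rewrite add0r; case: s. Qed.
Lemma smul1r (x : S) : smul x (sone G) = x.
Proof. by rewrite smulC smul1l. Qed.
Lemma smul0l (x : S) : smul (szero G) x = szero G. Proof. by []. Qed.
Lemma smul0r (x : S) : smul x (szero G) = szero G. Proof. by case: x => [[]|]. Qed.

HB.instance Definition _ := Monoid.isComLaw.Build S (sone G) (@smul G) smulA smulC smul1l.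

End Smul.


Section Main.
Variable G : porderZmodType.
Hypothesis HG : divisible_toag G.
Local Notation S := (Smax G).
Local Notation O := (szero G).
#[local] HB.instance Definition _ := Monoid.isComLaw.Build S (szero G) (@sadd G) (saddA HG) (saddC HG) (@sadd0l G).

Ltac simp_lt := repeat (rewrite ?ltxx; match goal with
  | H : is_true (?a < ?b) |- context [?a < ?b] => rewrite H
  | H : is_true (?a < ?b) |- context [?b < ?a] => rewrite (lt_ngt H)
  end); rewrite ?ltxx.

Lemma ltD2lE (a b c : G) : (a + b < a + c) = (b < c).
Proof.
apply/idP/idP => [h|]; last exact: ltD2l.
by have := ltD2l HG (- a) h; rewrite !addKr.
Qed.

Lemma soppK (x : S) : sopp (sopp x) = x.
Proof. by case: x => [[a []]|]. Qed.

Lemma sopp_sadd (x y : S) : sopp (sadd x y) = sadd (sopp x) (sopp y).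
Proof.
case: x y => [[a s]|] [[b t]|] //=.
by case: ifP => _ //; case: ifP => _ //; case: s; case: t.
Qed.

Lemma sopp_smull (x y : S) : sopp (smul x y) = smul (sopp x) y.
Proof. by case: x y => [[a s]|] [[b t]|] //=; case: s; case: t. Qed.

Lemma sopp_smulr (x y : S) : sopp (smul x y) = smul x (sopp y).
Proof. by rewrite smulC sopp_smull smulC. Qed.

Lemma smulDr (x y z : S) : smul x (sadd y z) = sadd (smul x y) (smul x z).
Proof.
case: x y z => [[a s]|] [[b t]|] [[c u]|] //=; rewrite ?ltD2lE //.

case: ifP => _ //; case: ifP => _ //.
by case: s; case: t; case: u.
Qed.

Lemma smulDl (x y z : S) : smul (sadd y z) x = sadd (smul y x) (smul z x).
Proof. by rewrite ![smul _ x]smulC smulDr. Qed.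

Lemma sbig_distr (I : finType) (P : pred I) (F : I -> S) a :
  smul a (\big[@sadd G/O]_(i | P i) F i) = \big[@sadd G/O]_(i | P i) smul a (F i).
Proof. by rewrite (big_endo (smul a)) // ?smul0r // => x y; rewrite smulDr. Qed.

Lemma sopp_big (I : finType) (P : pred I) (F : I -> S) :
  sopp (\big[@sadd G/O]_(i | P i) F i) = \big[@sadd G/O]_(i | P i) sopp (F i).
Proof. by rewrite (big_endo (@sopp G)) // => x y; rewrite sopp_sadd. Qed.

Definition absv (x : S) : G := if x is Some (a, _) then a else 0.
Definition vlt (x y : S) : bool :=
  match x, y with
  | _, None => false
  | None, Some _ => true
  | Some (a, _), Some (b, _) => a < b
  end.

Lemma vlt_sadd (x y : S) : vlt y x -> sadd x y = x.
Proof.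
case: x y => [[a s]|] [[b t]|] //= h; first by rewrite (lt_ngt h) h.
Qed.

Lemma vlt_saddl (x y : S) : vlt y x -> sadd y x = x.
Proof. by move=> h; rewrite saddC // vlt_sadd. Qed.

Lemma vlt_trans (x y z : S) : vlt x y -> vlt y z -> vlt x z.
Proof. case: x y z => [[a s]|] [[b t]|] [[c u]|] //=; exact: lt_trans. Qed.

Lemma vlt_sadd_r (t x y : S) : vlt t x -> vlt t (sadd x y).
Proof.
case: x y t => [[a s]|] [[b u]|] [[c w]|] //= h.
- case: (gtri HG a b) => [h1|[e|h1]]; try subst; simp_lt => //=; first exact: lt_trans h h1.
  by subst; case: ifP.
- by do 3?case: ifP.
Qed.

Lemma vlt_sadd_lt (x y z : S) : vlt x z -> vlt y z -> vlt (sadd x y) z.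
Proof.
case: x y z => [[a s]|] [[b t]|] [[c u]|] //= h1 h2.
by do 3?case: ifP.
Qed.

Lemma vlt_saddlE (x y z : S) : vlt (sadd x y) z -> vlt x z.
Proof.
case: x y z => [[a s]|] [[b t]|] [[c u]|] //=.
- case: (gtri HG a b) => [h1|[e|h1]]; try subst; simp_lt => //=.
    by move=> h; apply: lt_trans h1 h.
  by subst; case: ifP.
- by do 3?case: ifP.
Qed.

Lemma vltNN (x : S) : vlt x x = false.
Proof. by case: x => [[a s]|] //=; rewrite ltxx. Qed.

Lemma vlt_opp (x y : S) : vlt (sopp x) y = vlt x y.
Proof. by case: x y => [[a s]|] [[b t]|]. Qed.
Lemma vlt_oppr (x y : S) : vlt x (sopp y) = vlt x y.
Proof. by case: x y => [[a s]|] [[b t]|]. Qed.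

Lemma sadd_dom_eq (P Q X : S) : vlt Q X -> sadd P Q = X -> P = X.
Proof.
case: P => [[a s]|]; last by move=> h e; move: h; rewrite -e /= vltNN.
move=> h e; case: Q h e => [[b t]|]; last by rewrite sadd0r.
case: X => [[c u]|] //= h.
case: (gtri HG a b) => [h1|[e|h1]]; try subst; simp_lt => //.
- by case => e _; move: h; rewrite e ltxx.
- by subst; case: ifP => _ [] e; move: h; rewrite e ltxx.
Qed.

Lemma big_vlt_le (I : finType) (P : pred I) (F : I -> S) t j :
  P j -> vlt t (F j) -> vlt t (\big[@sadd G/O]_(i | P i) F i).
Proof. by move=> Pj h; rewrite (bigD1 j) //=; apply: vlt_sadd_r. Qed.

Lemma big_vlt_lt (I : finType) (P : pred I) (F : I -> S) M :
  (forall i, P i -> F i = O \/ vlt (F i) M) ->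
  \big[@sadd G/O]_(i | P i) F i = O \/ vlt (\big[@sadd G/O]_(i | P i) F i) M.
Proof.
move=> h; apply: (big_ind (fun x => x = O \/ vlt x M)) => //; first by left.
move=> x y [->|hx] [->|hy]; rewrite ?sadd0r ?sadd0l; try by [left|right].
by right; apply: vlt_sadd_lt.
Qed.

Lemma big_dom (I : finType) (P Q : pred I) (F : I -> S) :
  (forall i, P i -> ~~ Q i -> F i = O \/ exists2 j, P j && Q j & vlt (F i) (F j)) ->
  \big[@sadd G/O]_(i | P i) F i = \big[@sadd G/O]_(i | P i && Q i) F i.
Proof.
move=> h; rewrite (bigID Q) /=.
set M := \big[_/_]_(i | P i && Q i) F i.
have := @big_vlt_lt I (fun i => P i && ~~ Q i) F M.
case.
- move=> i /andP[Pi nQi]; case: (h i Pi nQi) => [->|[j PQj hj]]; first by left.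
  by right; apply: (@big_vlt_le I (fun i => P i && Q i) F _ j).
- by move=> ->; rewrite sadd0r.
- by move=> hl; rewrite vlt_sadd.
Qed.

End Main.

Section Prod.
Variable G : porderZmodType.
Local Notation S := (Smax G).
Local Notation O := (szero G).
Definition nz (x : S) : bool := if x is Some _ then true else false.

Lemma bigmul_val (I : finType) (P : pred I) (F : I -> S) :
  (forall i, P i -> nz (F i)) ->
  exists s, \big[@smul G/sone G]_(i | P i) F i = Some (\sum_(i | P i) absv (F i), s).
Proof.
move=> h; apply: (big_rec2 (fun x y => exists s, x = Some (y, s))).
  by exists sPos.
move=> i y x Pi [s ->]; move: (h i Pi); case: (F i) => [[a t]|] //= _.
by exists (sign_mul t s).
Qed.

Lemma bigmul_nz (I : finType) (P : pred I) (F : I -> S) :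
  (forall i, P i -> nz (F i)) -> nz (\big[@smul G/sone G]_(i | P i) F i).
Proof. by move=> h; have [s ->] := bigmul_val h. Qed.

Lemma bigmul_zero (I : finType) (P : pred I) (F : I -> S) j :
  P j -> F j = O -> \big[@smul G/sone G]_(i | P i) F i = O.
Proof. by move=> Pj Fj; rewrite (bigD1 j) //= Fj. Qed.

Lemma bigmul_zero_inv (I : finType) (P : pred I) (F : I -> S) :
  nz (\big[@smul G/sone G]_(i | P i) F i) -> forall i, P i -> nz (F i).
Proof. by move=> h i Pi; case E: (F i) => //; move: h; rewrite (bigmul_zero Pi E). Qed.

Lemma signed_smul (x y : S) : signed x -> signed y -> signed (smul x y).
Proof. by case: x y => [[a s]|] [[b t]|] //=; case: s; case: t. Qed.

Lemma bigmul_signed (I : finType) (P : pred I) (F : I -> S) :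
  (forall i, P i -> signed (F i)) -> signed (\big[@smul G/sone G]_(i | P i) F i).
Proof.
move=> h; apply: (big_ind (@signed G)) => //; exact: signed_smul.
Qed.

Lemma bigmul_bal (I : finType) (P : pred I) (F : I -> S) j :
  (forall i, P i -> nz (F i)) -> P j -> balanced (F j) ->
  ~ signed (\big[@smul G/sone G]_(i | P i) F i).
Proof.
move=> h Pj bj; rewrite (bigD1 j) //=.
have := bigmul_nz (fun i (hi : P i && (i != j)) => h i (proj1 (andP hi))).
move: (h j Pj) bj; case: (F j) => [[a []]|] //=; rewrite /balanced //=.
by move=> _ _; case: (\big[@smul G/sone G]_(i | P i && (i != j)) F i) => [[b t] _ /= []|].
Qed.

Lemma ssign_powE m (x : S) :
  smul (ssign_pow G m) x = if odd m then sopp x else x.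
Proof.
rewrite /ssign_pow; case: (odd m); last exact: smul1l.
by case: x => [[a []]|] //=; rewrite add0r.
Qed.

Lemma vlt_sgn m m' (x y : S) :
  vlt (smul (ssign_pow G m) x) (smul (ssign_pow G m') y) = vlt x y.
Proof. by rewrite !ssign_powE; case: odd; case: odd; rewrite ?vlt_opp ?vlt_oppr. Qed.

Lemma vlt_prod (I : finType) (P P' : pred I) (F F' : I -> S) :
  (forall i, P i -> nz (F i)) -> (forall i, P' i -> nz (F' i)) ->
  vlt (\big[@smul G/sone G]_(i | P i) F i) (\big[@smul G/sone G]_(i | P' i) F' i) =
  (\sum_(i | P i) absv (F i) < \sum_(i | P' i) absv (F' i)).
Proof.
move=> h h'; have [s ->] := bigmul_val h; have [s' ->] := bigmul_val h'; by [].
Qed.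

Lemma signed_sopp (x : S) : signed (sopp x) <-> signed x.
Proof. by case: x => [[a []]|]; split. Qed.

Lemma signed_ssign m (x : S) : signed (smul (ssign_pow G m) x) <-> signed x.
Proof. by rewrite ssign_powE; case: odd; [exact: signed_sopp | done]. Qed.

Lemma nz_ssign m (x : S) : nz (smul (ssign_pow G m) x) = nz x.
Proof. by rewrite ssign_powE; case: odd; case: x => [[a []]|]. Qed.

End Prod.

Section Cof.
Variable G : porderZmodType.
Hypothesis HG : divisible_toag G.
Local Notation S := (Smax G).
Local Notation O := (szero G).
#[local] HB.instance Definition _ := Monoid.isComLaw.Build S (szero G) (@sadd G) (saddA HG) (saddC HG) (@sadd0l G).

Lemma ssign_pow_odd m m' : odd m = odd m' -> ssign_pow G m = ssign_pow G m'.
Proof. by rewrite /ssign_pow => ->. Qed.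

Lemma ssign_powD m m' : smul (ssign_pow G m) (ssign_pow G m') = ssign_pow G (m + m').
Proof.
rewrite ssign_powE /ssign_pow oddD.
by case: (odd m); case: (odd m') => //=; rewrite add0r.
Qed.

Lemma sadj_expand (m : nat) (M : 'M[S]_m.+1) (i j : 'I_m.+1) :
  sadj M i j = \big[@sadd G/O]_(s : 'S_m.+1 | s j == i)
     smul (ssign_pow G (odd_perm s)) (\big[@smul G/sone G]_(r | j != r) M r (s r)).
Proof.
rewrite /sadj mxE /sdet /sbig_add.
rewrite (reindex (lift_perm j i)); last first.
  pose ulsf x (s : 'S_m.+1) k := odflt k (unlift (s x) (s (lift x k))).
  have ulsfK x (s : 'S_m.+1) k: lift (s x) (ulsf x s k) = s (lift x k).
    rewrite /ulsf; have:= neq_lift x k.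
    by rewrite -(can_eq (permK s)) => /unlift_some[] ? ? ->.
  have inj_ulsf: injective (ulsf j _).
    move=> s; apply: can_inj (ulsf (s j) s^-1%g) _ => k'.
    by rewrite {1}/ulsf ulsfK !permK liftK.
  exists (fun s => perm (inj_ulsf s)) => [s _ | s].
    by apply/permP=> k'; rewrite permE /ulsf lift_perm_lift lift_perm_id liftK.
  move/(s _ =P _) => si0; apply/permP=> k.
  case: (unliftP j k) => [k'|] ->; rewrite ?lift_perm_id //.
  by rewrite lift_perm_lift -si0 permE ulsfK.
rewrite (sbig_distr HG).
apply: eq_big => [s | s _]; first by rewrite lift_perm_id eqxx.
rewrite smulA ssign_powD (@ssign_pow_odd _ (odd_perm (lift_perm j i s))); last first.
  by rewrite !oddD !oddb odd_lift_perm; case: (odd i); case: (odd j).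
congr smul; rewrite /sbig_mul.
case: (pickP 'I_m) => [k0 _ | n0]; last first.
  by rewrite !big1 // => [k /unlift_some[r] | r _]; have:= n0 r.
rewrite (reindex (lift j)).
  by apply: eq_big => [k | k _] /=; rewrite ?neq_lift // !mxE lift_perm_lift.
exists (fun k => odflt k0 (unlift j k)) => k; first by rewrite liftK.
by case/unlift_some=> k' -> ->.
Qed.

End Cof.

Section Cyc.
Variable G : porderZmodType.
Hypothesis HG : divisible_toag G.

Lemma sum_le (I : finType) (P : pred I) (f g : I -> G) :
  (forall i, P i -> f i <= g i) -> \sum_(i | P i) f i <= \sum_(i | P i) g i.
Proof.
move=> h; apply: (big_ind2 (fun x y => x <= y)) => //.
by move=> ? ? ? ? ; apply: leD.
Qed.

Lemma sum_lt (I : finType) (P : pred I) (f g : I -> G) x :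
  P x -> (forall i, P i -> f i < g i) -> \sum_(i | P i) f i < \sum_(i | P i) g i.
Proof.
move=> Px h; rewrite (bigD1 x) //= [X in _ < X](bigD1 x) //=.
apply: (ltD_le HG) => //; first exact: h.
by apply: sum_le => i /andP[Pi _]; apply: ltW; apply: h.
Qed.

Lemma perm_set_stable (I : finType) (s : {perm I}) (O : {set I}) :
  (forall r, r \in O -> s r \in O) -> forall r, (s r \in O) = (r \in O).
Proof.
move=> h.
have sub : s @: O \subset O by apply/subsetP => y /imsetP[x xO ->]; exact: h.
have eqO : s @: O = O.
  by apply/eqP; rewrite eqEcard sub /= card_imset //; exact: perm_inj.
by move=> r; rewrite -{1}eqO (mem_imset _ _ (@perm_inj _ s)).
Qed.

Lemma cycle_dom (I : finType) (w : I -> I -> G) (s : {perm I}) (O : {set I}) x :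
  x \in O ->
  (forall r, r \in O -> s r \in O) ->
  (forall r, r \in O -> (w r (s r)) *+ 2 < w r r + w (s r) (s r)) ->
  \sum_(r in O) w r (s r) < \sum_(r in O) w r r.
Proof.
move=> xO stab h; apply: (lt2 HG).
have e : (\sum_(r in O) w r r) *+ 2 = \sum_(r in O) (w r r + w (s r) (s r)).
  rewrite big_split /= mulr2n; congr (_ + _).
  rewrite (reindex_inj (@perm_inj _ s)) /=.
  by apply: eq_bigl => r; rewrite (perm_set_stable stab).
rewrite e -sumrMnl.
by apply: sum_lt xO _.
Qed.

Lemma perm_dom (I : finType) (w : I -> I -> G) (s : {perm I}) (P : pred I) :
  s != 1%g ->
  (forall r, s r != r -> P r) ->
  (forall r, s r != r -> (w r (s r)) *+ 2 < w r r + w (s r) (s r)) ->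
  \sum_(r | P r) w r (s r) < \sum_(r | P r) w r r.
Proof.
move=> ns1 hP h.
set O := [set r | s r != r].
have [x xO] : exists x, x \in O.
  have : ~~ [forall r, s r == r].
    by apply: contra ns1 => /forallP hh; apply/eqP/permP => r; rewrite perm1; apply/eqP.
  by rewrite negb_forall => /existsP [x hx]; exists x; rewrite /O inE.
rewrite (bigID (mem O)) [X in _ < X](bigID (mem O)) /=.
apply: (ltD_le HG).
  have e : forall F : I -> G, \sum_(i | P i && (i \in O)) F i = \sum_(i in O) F i.
    move=> F; apply: eq_bigl => i; case iO: (i \in O); rewrite ?andbT ?andbF //.
    by apply: hP; move: iO; rewrite /O inE.
  rewrite !e; apply: cycle_dom xO _ _.
    by move=> r; rewrite /O !inE; apply: contra => /eqP /perm_inj ->.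
  by move=> r; rewrite /O inE; apply: h.
apply: sum_le => i /andP[_]; rewrite /O inE => /negbNE/eqP ->; exact: lexx.
Qed.

End Cyc.

Section Mat.
Variable G : porderZmodType.
Hypothesis HG : divisible_toag G.
Local Notation S := (Smax G).
Local Notation O := (szero G).
#[local] HB.instance Definition _ := Monoid.isComLaw.Build S (szero G) (@sadd G) (saddA HG) (saddC HG) (@sadd0l G).

Variable n : nat.
Variable B : 'M[S]_n.+1.
Hypothesis Bnz : forall r, nz (B r r).
Hypothesis Bdom : forall r c, r != c -> nz (B r c) ->
  absv (B r c) *+ 2 < absv (B r r) + absv (B c c).

Definition sgnt (s : 'S_n.+1) : S := ssign_pow G (odd_perm s).

Lemma principal (j : 'I_n.+1) :
  sadj B j j = \big[@smul G/sone G]_(r | j != r) B r r.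
Proof.
rewrite (sadj_expand HG) (@big_dom _ HG _ _ (fun s => s == 1%g)).
  rewrite (big_pred1 1%g); last first.
    by move=> s /=; rewrite andbC; case: eqP => // ->; rewrite perm1 eqxx.
  rewrite odd_perm1 (_ : ssign_pow G false = sone G) // smul1l; apply: eq_bigr => r _; by rewrite perm1.
move=> s /eqP sj ns1.
case nzt: (nz (smul (ssign_pow G (odd_perm s)) (\big[@smul G/sone G]_(r | j != r) B r (s r)))); last first.
  by left; move: nzt; case: (smul _ _).
right; exists 1%g; first by rewrite perm1 !eqxx.
have nzp := nzt; rewrite nz_ssign in nzp.
have hf := bigmul_zero_inv nzp.
rewrite vlt_sgn vlt_prod //; last by move=> r _; rewrite perm1.
have hj : forall r, s r != r -> j != r.
  by move=> r; apply: contra => /eqP <-; rewrite sj.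
under [X in _ < X]eq_bigr do rewrite perm1.
apply: (perm_dom HG (w := fun r c => absv (B r c))) => // r nr.
by apply: Bdom; rewrite 1?eq_sym //; apply: hf; apply: hj.
Qed.

End Mat.

Section PermAux.
Variable T : finType.

Lemma porbit_stab (t : {perm T}) x y : (t x \in porbit t y) = (x \in porbit t y).
Proof.
by rewrite -!eq_porbit_mem -[t x]/(aperm x t) -(expg1 t) porbit_perm.
Qed.

Lemma porbit_fix (t : {perm T}) l r : t l != l -> r \in porbit t l -> t r != r.
Proof.
move=> tl; rewrite porbit_sym => /porbitP[i el]; apply: contra tl => /eqP tr.
have e : forall i, ((t ^+ i)%g) r = r.
  by elim=> [|j IH]; rewrite ?expg0 ?perm1 // expgSr permM IH tr.
by rewrite el e tr.
Qed.

Lemma tperm_orbit (s : {perm T}) k l : k != l -> k \in porbit s l ->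
  k \notin porbit (tperm k l * s) l.
Proof.
move=> kl kin.
have h1 := porbits_mul_tperm s k l.
have h2 := porbits_mul_tperm (tperm k l * s) k l.
rewrite /= tpermKg kin kl /= in h1 h2.
move: h1 h2; case: (k \in porbit (tperm k l * s) l) => //= h1 h2.
lia.
Qed.

End PermAux.

Section Star.
Variable G : porderZmodType.
Hypothesis HG : divisible_toag G.
Local Notation S := (Smax G).
Local Notation O := (szero G).
#[local] HB.instance Definition _ := Monoid.isComLaw.Build S (szero G) (@sadd G) (saddA HG) (saddC HG) (@sadd0l G).

Variable n : nat.
Variable B : 'M[S]_n.+1.
Variable a : 'I_n.+1 -> 'I_n.+1 -> S.
Hypothesis Bnz : forall r, nz (B r r).
Hypothesis Bdom : forall r c, r != c -> nz (B r c) ->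
  absv (B r c) *+ 2 < absv (B r r) + absv (B c c).
Hypothesis Boff : forall r c, r != c -> B r c = sopp (a r c).
Variables k l : 'I_n.+1.
Hypothesis lk : l != k.

Definition Bp r c := B (if r == k then l else r) c.
Definition Tt (s : 'S_n.+1) := smul (sgnt G s) (\big[@smul G/sone G]_r Bp r (s r)).

Lemma star1 : smul (B l l) (sadj B l k) = \big[@sadd G/O]_(s : 'S_n.+1 | s k == l) Tt s.
Proof.
rewrite (sadj_expand HG) (sbig_distr HG); apply: eq_bigr => s /eqP skl.
rewrite /Tt [\big[_/_]_r Bp r (s r)](bigD1 k) //= {1}/Bp eqxx skl.
rewrite smulA (smulC (B l l)) -smulA; congr (smul _ (smul _ _)).
apply: eq_big => r; first by rewrite eq_sym.
by move=> /negbTE h; rewrite /Bp eq_sym h.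
Qed.

Lemma sgnt_tperm (s : 'S_n.+1) x : smul (sgnt G (tperm k l * s)) x = sopp (smul (sgnt G s) x).
Proof.
rewrite /sgnt odd_mul_tperm eq_sym lk /= !ssign_powE.
by case: (odd_perm s) => /=; rewrite ?soppK.
Qed.

Lemma star_term (s : 'S_n.+1) : s l != l ->
  smul (a l ((tperm k l * s)%g k))
    (smul (sgnt G (tperm k l * s)) (\big[@smul G/sone G]_(r | k != r) B r ((tperm k l * s)%g r)))
  = Tt s.
Proof.
move=> sl; have sl' : l != s l by rewrite eq_sym.
rewrite sgnt_tperm permM tpermL /Tt.
rewrite [\big[_/_]_r Bp r (s r)](bigD1 k) //= [\big[_/_]_(i | i != k) Bp i (s i)](bigD1 l) /=; last by rewrite lk.
rewrite [\big[_/_]_(i | k != i) B i _](bigD1 l) /=; last by rewrite eq_sym lk.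
rewrite permM tpermR /Bp eqxx (negbTE lk) (Boff sl').
set R1 := \big[_/_]_(i | (k != i) && (i != l)) _.
set R2 := \big[_/_]_(i | (i != k) && (i != l)) _.
have -> : R1 = R2.
  rewrite /R1 /R2; apply: eq_big => r; first by rewrite eq_sym.
  move=> /andP[rk rl]; rewrite permM tpermD //; last by rewrite eq_sym.
  by rewrite (negbTE (_ : r != k)) // eq_sym.
rewrite -!sopp_smull -!sopp_smulr; congr sopp.
rewrite !smulA; congr (smul _ R2).
rewrite (smulC (a _ _)) -!smulA; congr (smul _ _).
by rewrite smulC.
Qed.


Lemma star2 : \big[@sadd G/O]_(m | m != l) smul (a l m) (sadj B m k) =
  \big[@sadd G/O]_(s : 'S_n.+1 | s l != l) Tt s.
Proof.
transitivity (\big[@sadd G/O]_(s : 'S_n.+1 | s k != l)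
   smul (a l (s k)) (smul (sgnt G s) (\big[@smul G/sone G]_(r | k != r) B r (s r)))).
  rewrite (partition_big (fun s : 'S_n.+1 => s k) (fun m => m != l)) //=.
  apply: eq_bigr => m ml; rewrite (sadj_expand HG) (sbig_distr HG).
  apply: eq_big => s; first by case: (s k =P m) => [->|]; rewrite ?ml ?andbF.
  by move=> /eqP ->.
rewrite (reindex_inj (mulgI (tperm k l))) /=.
apply: eq_big => s; first by rewrite permM tpermL.
by move=> h; apply: star_term; move: h; rewrite permM tpermL.
Qed.


Lemma Tt_tperm (s : 'S_n.+1) : Tt (tperm k l * s) = sopp (Tt s).
Proof.
rewrite /Tt sgnt_tperm; congr (sopp (smul _ _)).
rewrite [RHS](reindex_inj (@perm_inj _ (tperm k l))) /=.
apply: eq_bigr => r _; rewrite permM /Bp.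
case: tpermP => [->|->|/eqP rk /eqP rl]; rewrite ?eqxx ?(negbTE lk) //.
Qed.

Lemma dom_step (t : 'S_n.+1) : t l != l -> t k != l -> k \notin porbit t l -> nz (Tt t) ->
  exists2 p : 'S_n.+1, (p l != l) && (p k == l) & vlt (Tt t) (Tt p).
Proof.
move=> tl tkl kO nzt.
set Ob := porbit t l.
have lO : l \in Ob by apply: porbit_id.
have stab : forall x, (t x \in Ob) = (x \in Ob) by move=> x; apply: porbit_stab.
have tkO : t k \notin Ob by rewrite stab.
pose f r := if r == k then l else if r == l then t k else if r \in Ob then r else t r.
have finj : injective f.
  move=> x y; rewrite /f.
  case: (x =P k) => [->|xk]; case: (y =P k) => [->|yk] //.
  - case: (y =P l) => [->|yl]; first by move=> e; move: tkl; rewrite -e eqxx.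
    case: ifP => yO e; first by case: yl.
    by move: yO; rewrite -stab -e lO.
  - case: (x =P l) => [->|xl]; first by move=> e; move: tkl; rewrite e eqxx.
    case: ifP => xO e; first by case: xl.
    by move: xO; rewrite -stab e lO.
  case: (x =P l) => [->|xl]; case: (y =P l) => [->|yl] //.
  - case: ifP => yO e; first by move: tkO; rewrite e yO.
    by move/perm_inj: e => e; case: yk.
  - case: ifP => xO e; first by move: tkO; rewrite -e xO.
    by move/perm_inj: e => e; case: xk.
  case: ifP => xO; case: ifP => yO e //.
  - by move: xO; rewrite e stab yO.
  - by move: yO; rewrite -e stab xO.
  - exact: perm_inj e.
pose p := perm finj.
have pk : p k = l by rewrite permE /f eqxx.
have pl : p l = t k by rewrite permE /f (negbTE lk) eqxx.
have pO : forall r, r \in Ob -> r != l -> p r = r.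
  move=> r rO rl; rewrite permE /f (negbTE rl) rO.
  by case: (r =P k) => // rk; move: kO; rewrite -rk rO.
have pout : forall r, r \notin Ob -> r != k -> p r = t r.
  move=> r rO rk; rewrite permE /f (negbTE rk) (negbTE rO).
  by case: (r =P l) => // rl; move: rO; rewrite rl lO.
exists p; first by rewrite pk pl tkl eqxx.
have nzp := nzt; rewrite /Tt nz_ssign in nzp.
have hf := bigmul_zero_inv nzp.
have rOk : forall r, r \in Ob -> r != k by move=> r rO; apply: contra kO => /eqP <-.
have hfp : forall r, true -> nz (Bp r (p r)).
  move=> r _; case: (r =P k) => [->|/eqP rk]; first by rewrite pk /Bp eqxx.
  case: (r =P l) => [->|/eqP rl]; first by rewrite pl /Bp (negbTE lk); have := hf k isT; rewrite /Bp eqxx.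
  case rO: (r \in Ob); first by rewrite pO // /Bp (negbTE rk).
  by rewrite pout ?rO //; apply: hf.
rewrite /Tt vlt_sgn vlt_prod //.
pose w r c := absv (B r c).
pose Y := \sum_(r | (r \notin Ob) && (r != k)) w r (t r).
have hcyc : \sum_(r in Ob) w r (t r) < \sum_(r in Ob) w r r.
  apply: (cycle_dom HG lO) => [r|r rO]; first by rewrite stab.
  have rk := rOk r rO.
  have := hf r isT; rewrite /Bp (negbTE rk) => nzr.
  by apply: Bdom => //; rewrite eq_sym; apply: porbit_fix tl rO.
have E1 : \sum_r absv (Bp r (t r)) = \sum_(r in Ob) w r (t r) + (w l (t k) + Y).
  rewrite (bigID (mem Ob)) /=; congr (_ + _).
    by apply: eq_big => r //= rO; rewrite /Bp (negbTE (rOk r rO)).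
  rewrite (bigD1 k) //= {1}/Bp eqxx; congr (_ + _).
  by apply: eq_big => r //= /andP[_ rk]; rewrite /Bp (negbTE rk).
have E2 : \sum_r absv (Bp r (p r)) = \sum_(r in Ob) w r r + (w l (t k) + Y).
  rewrite (bigID (mem Ob)) /= (bigD1 l) //= pl {1}/Bp (negbTE lk).
  rewrite [X in _ = X + _](bigD1 l) //=.
  rewrite [\sum_(i | ~~ (i \in Ob)) _](bigD1 k) //= pk (_ : Bp k l = B l l); last by rewrite /Bp eqxx.
  set Z1 := \sum_(i | (i \in Ob) && (i != l)) _.
  set Z2 := \sum_(i | (i \in Ob) && (i != l)) _.
  have -> : Z1 = Z2.
    by apply: eq_bigr => r /andP[rO rl]; rewrite pO // /Bp (negbTE (rOk r rO)).
  have -> : \sum_(i | ~~ (i \in Ob) && (i != k)) absv (Bp i (p i)) = Y.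
    by apply: eq_bigr => r /andP[rO rk]; rewrite pout // /Bp (negbTE rk).
  by rewrite addrACA [RHS]addrACA [w l (t k) + _]addrC.
rewrite E1 E2; exact: ltD2r.
Qed.

Lemma star3 : \big[@sadd G/O]_(s : 'S_n.+1 | s l != l) Tt s =
  \big[@sadd G/O]_(s : 'S_n.+1 | s k == l) Tt s.
Proof.
rewrite (@big_dom _ HG _ _ (fun s : 'S_n.+1 => s k == l)).
  apply: eq_bigl => s; case: (s k =P l) => [skl|]; rewrite ?andbF ?andbT //.
  apply/negP => /eqP sl; have : s l = s k by rewrite sl skl.
  by move/perm_inj => e; move: lk; rewrite e eqxx.
move=> s sl skl.
case nzt: (nz (Tt s)); last by left; move: nzt; case: (Tt s).
right.
case kin: (k \in porbit s l).
- have nzt' : nz (Tt (tperm k l * s)) by rewrite Tt_tperm; move: nzt; case: (Tt s) => [[? []]|].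
  have kl : k != l by rewrite eq_sym.
  have h1 : (tperm k l * s)%g l != l by rewrite permM tpermR.
  have h2 : (tperm k l * s)%g k != l by rewrite permM tpermL.
  have [p hp hv] := dom_step h1 h2 (tperm_orbit kl kin) nzt'.
  by exists p => //; move: hv; rewrite Tt_tperm vlt_opp.
- have [p hp hv] := dom_step sl skl (negbT kin) nzt.
  by exists p.
Qed.

Lemma star : smul (B l l) (sadj B l k) =
  \big[@sadd G/O]_(m | m != l) smul (a l m) (sadj B m k).
Proof. by rewrite star1 -star3 star2. Qed.

End Star.

Lemma sign_eqbP : Equality.axiom sign_eqb.
Proof. by case; case; constructor. Qed.
HB.instance Definition _ := hasDecEq.Build tsign sign_eqbP.

Section Uniq.
Variable G : porderZmodType.
Hypothesis HG : divisible_toag G.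
Local Notation S := (Smax G).
Local Notation O := (szero G).
#[local] HB.instance Definition _ := Monoid.isComLaw.Build S (szero G) (@sadd G) (saddA HG) (saddC HG) (@sadd0l G).

Lemma exists_max (I : finType) (A : {set I}) (K : I -> G) x :
  x \in A -> exists2 l, l \in A & forall m, m \in A -> K m <= K l.
Proof.
move=> xA.
suff : forall s : seq I, s != [::] -> exists2 l, l \in s & forall m, m \in s -> K m <= K l.
  case/(_ (enum A)); first by apply/eqP => e; move: xA; rewrite -mem_enum e.
  by move=> l; rewrite mem_enum => lA h; exists l => // m; rewrite -mem_enum; apply: h.
elim=> // y s IH _.
case: (altP (s =P [::])) => [->|ns].
  by exists y; rewrite ?inE // => m; rewrite inE => /eqP ->.
have [l ls hl] := IH ns.
case/orP: (gtot HG (K y) (K l)) => h.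
  exists l; first by rewrite inE ls orbT.
  by move=> m; rewrite inE => /orP[/eqP ->|]; [|apply: hl].
exists y; first by rewrite inE eqxx.
move=> m; rewrite inE => /orP[/eqP ->|ms]; first exact: lexx.
exact: le_trans (hl m ms) h.
Qed.

Lemma signed_not_bal (x : S) : signed x -> nz x -> ~ balanced x.
Proof. by case: x => [[a []]|] //. Qed.

Lemma smul_inj (d x y : S) : signed d -> nz d -> smul d x = smul d y -> x = y.
Proof.
case: d => [[e s]|] // sd _; case: x y => [[a t]|] [[b u]|] //= [].
by move/addrI => -> ; case: s sd t u => // _ [] [].
Qed.

Lemma vlt_smul2 (d x y : S) : nz d -> vlt (smul d x) (smul d y) = vlt x y.
Proof.
by case: d => [[e s]|] // _; case: x y => [[a t]|] [[b u]|] //=; rewrite ltD2lE.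
Qed.

Lemma eq_vals (x y : S) : signed x -> signed y -> nz x -> ~~ vlt x y -> ~~ vlt y x ->
  y = x \/ y = sopp x.
Proof.
case: x y => [[a s]|] [[b t]|] //= sx sy _ h1 h2.
have e : a = b.
  by case: (gtri HG a b) => [h|[//|h]]; [move: h1; rewrite h | move: h2; rewrite h].
subst; case: s t sx sy {h1 h2} => [] [] //= _ _; by [left | right].
Qed.

Lemma sadd_self (x : S) : signed x -> sadd x x = x.
Proof. by case: x => [[a []]|] //= _; rewrite ltxx. Qed.

Variable n : nat.
Local Notation I := 'I_n.+1.
Variables (D : I -> S) (c : I -> I -> S) (k : I) (v w : I -> S).
Hypothesis vs : forall i, signed (v i).
Hypothesis ws : forall i, signed (w i).
Hypothesis vwk : v k = w k.
Hypothesis Dsig : forall l, l != k -> signed (D l).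
Hypothesis Dnz : forall l, nz (D l).
Hypothesis cdom : forall l m, l != m -> nz (c l m) ->
  absv (c l m) *+ 2 < absv (D l) + absv (D m).
Hypothesis weq : forall l, l != k ->
  smul (D l) (w l) = \big[@sadd G/O]_(m | m != l) smul (c l m) (w m).
Hypothesis veq : forall l, l != k ->
  balanced (ssub (smul (D l) (v l)) (\big[@sadd G/O]_(m | m != l) smul (c l m) (v m))).

Definition hm (m : I) : G := if vlt (w m) (v m) then absv (v m) else absv (w m).
Definition Km (m : I) : G := hm m *+ 2 + absv (D m).

Lemma nz_smul (x y : S) : nz x -> nz y -> nz (smul x y).
Proof. by case: x y => [[a s]|] [[b t]|]. Qed.

Lemma vlt_smul4 (x1 x2 x3 x4 : S) : nz x1 -> nz x2 -> nz x3 -> nz x4 ->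
  vlt (smul x1 x2) (smul x3 x4) = (absv x1 + absv x2 < absv x3 + absv x4).
Proof. by case: x1 => [[? ?]|] //; case: x2 => [[? ?]|] //; case: x3 => [[? ?]|] //; case: x4 => [[? ?]|]. Qed.

Lemma absv_smul (x y : S) : nz x -> nz y -> absv (smul x y) = absv x + absv y.
Proof. by case: x y => [[a s]|] [[b t]|]. Qed.

Lemma uniq_vec : forall i, v i = w i.
Proof.
suff nex : ~~ [exists i, v i != w i].
  by move=> i; apply/eqP; apply: contraNT nex => h; apply/existsP; exists i.
apply/negP => /existsP[x0 xD].
set Ds := [set i | v i != w i].
have xDs : x0 \in Ds by rewrite inE.
have [l lD lmax] := exists_max Km xDs.
have vwl : v l != w l by move: lD; rewrite inE.
have lk : l != k by apply: contra vwl => /eqP ->; rewrite vwk.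
pose M := if vlt (w l) (v l) then v l else w l.
have hmM : hm l = absv M by rewrite /hm /M; case: ifP.
have nzM : nz M.
  rewrite /M; case: ifP => h; first by move: h; case: (v l) => [[]|]; case: (w l) => [[]|].
  apply: contraT => nzw; move: h vwl; case: (w l) nzw => // _; case: (v l) => [[? ?]|] //.
have Xm_nz : nz (smul (D l) M) by apply: nz_smul.
have Qb : forall m x, m != l -> m \in Ds -> (x = v m \/ x = w m) ->
    smul (c l m) x = O \/ vlt (smul (c l m) x) (smul (D l) M).
  move=> m x ml mD hx.
  case nzc: (nz (c l m)); last by left; move: nzc; case: (c l m).
  case nzx: (nz x); last by left; move: nzx; case: x {hx} => [[]|] //; rewrite smul0r.
  right; move: Xm_nz.
  have -> : vlt (smul (c l m) x) (smul (D l) M) =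
            (absv (c l m) + absv x < absv (D l) + absv M).
    by rewrite vlt_smul4.
  move=> _; apply: (lt2 HG); rewrite !mulrnDl.
  have hxm : absv x <= hm m.
    move: nzx; rewrite /hm; case: hx => ->; case: (w m) => [[b t]|]; case: (v m) => [[a0 s0]|] //= _;
    rewrite ?lexx //; case: ifP => h; rewrite ?lexx //;
    first [exact: ltW h | by move/negbT: h; rewrite (ltNge HG) negbK].
  have h1 := cdom (_ : l != m) nzc; rewrite eq_sym ml in h1; have {}h1 := h1 isT.
  have hx2 : absv x *+ 2 <= hm m *+ 2 by rewrite !mulr2n; apply: leD.
  have hK := lmax m mD.
  apply: (lt_le_trans (ltD2r HG (absv x *+ 2) h1)).
  apply: (le_trans (leD2l HG _ hx2)).
  have -> : absv (D l) + absv (D m) + hm m *+ 2 = absv (D l) + Km m.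
    by rewrite /Km -addrA [absv (D m) + _]addrC.
  apply: (le_trans (leD2l HG _ hK)); rewrite /Km hmM.
  by rewrite addrCA addrC -mulr2n lexx.
have nz_opp : forall y : S, nz (sopp y) = nz y by case=> [[]|].
have split : forall x : I -> S, \big[@sadd G/O]_(m | m != l) smul (c l m) (x m) =
    sadd (\big[@sadd G/O]_(m | (m != l) && (m \notin Ds)) smul (c l m) (x m))
         (\big[@sadd G/O]_(m | (m != l) && (m \in Ds)) smul (c l m) (x m)).
  by move=> x; rewrite (bigID (fun m => m \in Ds)) /= (saddC HG).
set P := \big[@sadd G/O]_(m | (m != l) && (m \notin Ds)) smul (c l m) (w m).
have eP : \big[@sadd G/O]_(m | (m != l) && (m \notin Ds)) smul (c l m) (v m) = P.
  apply: eq_bigr => m /andP[_]; rewrite inE negbK => /eqP ->; by [].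
set Qv := \big[@sadd G/O]_(m | (m != l) && (m \in Ds)) smul (c l m) (v m).
set Qw := \big[@sadd G/O]_(m | (m != l) && (m \in Ds)) smul (c l m) (w m).
have hQv : Qv = O \/ vlt Qv (smul (D l) M).
  apply: big_vlt_lt => m /andP[ml mD]; apply: Qb => //; by left.
have hQw : Qw = O \/ vlt Qw (smul (D l) M).
  apply: big_vlt_lt => m /andP[ml mD]; apply: Qb => //; by right.
have hw := weq lk; rewrite split -/P -/Qw in hw.
have hv := veq lk; rewrite split eP -/Qv in hv.
have sY : signed (smul (D l) (v l)) by apply: signed_smul; [apply: Dsig | apply: vs].
have sW : signed (smul (D l) (w l)) by apply: signed_smul; [apply: Dsig | apply: ws].
case hM: (vlt (w l) (v l)).
- have eM : M = v l by rewrite /M hM.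
  rewrite eM in hQv Xm_nz.
  have vltw : vlt (smul (D l) (w l)) (smul (D l) (v l)) by rewrite (@vlt_smul2 (D l) _ _ (Dnz l)).
  have hP : vlt P (smul (D l) (v l)) by apply: (vlt_saddlE HG (y := Qw)); rewrite -hw.
  have hPQ : vlt (sadd P Qv) (smul (D l) (v l)).
    by case: hQv => [->|h]; [rewrite sadd0r | apply: vlt_sadd_lt].
  move: hv; rewrite /ssub vlt_sadd; last by rewrite vlt_opp.
  exact: signed_not_bal.
- have eM : M = w l by rewrite /M hM.
  rewrite eM in hQv hQw Xm_nz.
  have hP : P = smul (D l) (w l).
    case: hQw hw => [-> |h] hw; first by rewrite sadd0r in hw.
    by apply: (sadd_dom_eq HG h).
  rewrite hP /ssub sopp_sadd in hv.
  have e2 : sadd (sopp (smul (D l) (w l))) (sopp Qv) = sopp (smul (D l) (w l)).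
    by case: hQv => [->|h]; [rewrite sadd0r | apply: vlt_sadd; rewrite vlt_opp vlt_oppr].
  rewrite e2 in hv.
  have sXo : signed (sopp (smul (D l) (w l))) by apply/signed_sopp.
  have nXo : nz (sopp (smul (D l) (w l))) by rewrite nz_opp.
  case hY: (vlt (smul (D l) (v l)) (smul (D l) (w l))).
    move: hv; rewrite (vlt_saddl HG); last by rewrite vlt_oppr.
    exact: signed_not_bal.
  have nYX : ~~ vlt (smul (D l) (w l)) (smul (D l) (v l)) by rewrite (@vlt_smul2 (D l) _ _ (Dnz l)) hM.
  case: (eq_vals sW sY Xm_nz nYX (negbT hY)) => e.
    by move: vwl; rewrite (smul_inj (Dsig lk) (Dnz l) e) eqxx.
  move: hv; rewrite e sadd_self //; exact: signed_not_bal.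
Qed.

End Uniq.

Section Final.
Variable G : porderZmodType.
Hypothesis HG : divisible_toag G.
Local Notation S := (Smax G).
Local Notation O := (szero G).
#[local] HB.instance Definition _ := Monoid.isComLaw.Build S (szero G) (@sadd G) (saddA HG) (saddC HG) (@sadd0l G).

Variable n : nat.
Variable A : 'M[S]_n.+1.
Hypothesis HA : TPD A.
Variable k : 'I_n.+1.

Local Notation B := (sshift (A k k) A).

Lemma diag_pos i : exists d, A i i = Some (d, sPos).
Proof.
case: HA => _ _ Apos _; move: (Apos i); rewrite /slt /ssub /=.
by case: (A i i) => [[d []]|] //= _; exists d.
Qed.

Lemma Bdiag i : B i i = ssub (A k k) (A i i).
Proof. by rewrite mxE eqxx. Qed.

Lemma Boff r c : r != c -> B r c = sopp (A r c).
Proof. by move=> rc; rewrite mxE (negbTE rc). Qed.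

Lemma Bdiag_nz i : nz (B i i).
Proof.
rewrite Bdiag; have [d ->] := diag_pos i; have [g ->] := diag_pos k.
by rewrite /ssub /=; do 2?case: ifP.
Qed.

Lemma Bdiag_ge i : absv (A i i) <= absv (B i i).
Proof.
rewrite Bdiag; have [d ->] := diag_pos i; have [g ->] := diag_pos k.
rewrite /ssub /=; case: ifP => h1 /=; first exact: lexx.
case: ifP => h2 /=; first exact: ltW.
by move/negbT: h1; rewrite (ltNge HG) negbK.
Qed.

Lemma Bdiag_sig i : A i i != A k k -> signed (B i i).
Proof.
rewrite Bdiag; have [d ->] := diag_pos i; have [g ->] := diag_pos k => ne.
rewrite /ssub /=; case: ifP => h1 //=; case: ifP => h2 //=.
have e : g = d by case: (gtri HG g d) => [h|[//|h]]; [move: h1; rewrite h | move: h2; rewrite h].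
by move: ne; rewrite e eqxx.
Qed.

Lemma Bdiag_bal i : A i i = A k k -> balanced (B i i).
Proof.
move=> e; rewrite Bdiag e; have [g ->] := diag_pos k.
by rewrite /ssub /= ltxx.
Qed.

Lemma Bdom r c : r != c -> nz (B r c) ->
  absv (B r c) *+ 2 < absv (B r r) + absv (B c c).
Proof.
move=> rc nzB; rewrite (Boff rc) in nzB *.
case: HA => _ Asig _ Aoff.
have := Aoff r c rc; have := Asig r c.
have ger := Bdiag_ge r; have gec := Bdiag_ge c.
have [dr er] := diag_pos r; have [dc ec] := diag_pos c.
rewrite er /= in ger; rewrite ec /= in gec.
move: nzB; rewrite /slt /ssub er ec.
case: (A r c) => [[e s]|] //= _ ss h.
have hlt : e + e < dr + dc.
  by case: s ss h => // _ /=; case: ifP => _ //; case: ifP.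
by rewrite mulr2n; apply: lt_le_trans hlt (leD HG ger gec).
Qed.

Definition sinv (x : S) : S := if x is Some (a, s) then Some (- a, s) else None.

Lemma sinvK (x : S) : signed x -> nz x -> smul (sinv x) x = sone G.
Proof. by case: x => [[a []]|] //= _ _; rewrite addNr. Qed.

Lemma signed_sinv (x : S) : signed x -> signed (sinv x).
Proof. by case: x => [[a []]|]. Qed.

Lemma bal_opp (x : S) : balanced (sopp x) -> balanced x.
Proof. by case: x => [[a []]|]. Qed.

Lemma main_sec (j : 'I_n.+1)
  (Hcol : signed_vec (fun i => sadj B i j) /\ nonzero_vec (fun i => sadj B i j)) :
  j = k /\
  (forall v : 'I_n.+1 -> Smax G, seigenvector A (A k k) v ->
     exists lam : Smax G, forall i, v i = smul lam (sadj B i j)) /\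
  simple_eigenvalue_TPD A (A k k).
Proof.
have Bnz := Bdiag_nz.
have Pr := principal HG Bnz Bdom.
have jk : j = k.
  apply/eqP; apply: contraT => jk.
  have := Hcol.1 j; rewrite Pr => h; exfalso.
  exact: (@bigmul_bal G _ (fun r => j != r) (fun r => B r r) k (fun r _ => Bnz r) jk (Bdiag_bal (erefl (A k k))) h).
subst j.
have simple : forall i, A i i = A k k -> i = k.
  move=> i e; apply/eqP; apply: contraT => ik.
  have := Hcol.1 k; rewrite Pr => h; exfalso.
  have ki : k != i by rewrite eq_sym.
  exact: (@bigmul_bal G _ (fun r => k != r) (fun r => B r r) i (fun r _ => Bnz r) ki (Bdiag_bal e) h).
split; first done; split; last by exists k.
move=> v [vs vnz veig].
pose u i := sadj B i k.
have suk : signed (u k) := Hcol.1 k.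
have nzuk : nz (u k) by rewrite /u Pr; apply: bigmul_nz => r _.
pose lam := smul (v k) (sinv (u k)).
exists lam.
apply: (uniq_vec HG (D := fun r => B r r) (c := A) (k := k) (v := v)
                     (w := fun i => smul lam (u i))).
- exact: vs.
- move=> i; apply: signed_smul; last exact: Hcol.1 i.
  by apply: signed_smul; [apply: vs | apply: signed_sinv].
- by rewrite /lam -smulA sinvK // smul1r.
- move=> l lk; apply: Bdiag_sig; apply: contra lk => /eqP e; apply/eqP; exact: simple.
- exact: Bnz.
- move=> l m lm nzA; have := Bdom lm; rewrite (Boff lm).
  have e1 : forall x : S, absv (sopp x) = absv x by case=> [[]|].
  have e2 : forall x : S, nz (sopp x) = nz x by case=> [[]|].
  by rewrite e1 e2; apply.
- move=> l lk /=.
  have st := star HG Bnz Bdom (@Boff) lk.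
  rewrite smulA (smulC (B l l) lam) -smulA /u st (sbig_distr HG).
  by apply: eq_bigr => m _; rewrite smulA (smulC lam) -smulA.
- move=> l lk /=.
  have h := veig l; rewrite /sbal /smulmxv /sbig_add (bigD1 l) //= in h.
  apply: bal_opp; move: h.
  set R := \big[@sadd G/O]_(m | m != l) smul (A l m) (v m).
  rewrite Bdiag /ssub sopp_sadd soppK (smulDl HG) sopp_sadd -sopp_smull soppK.
  set g := sopp (smul (A k k) (v l)); set a0 := smul (A l l) (v l).
  rewrite [sadd (sadd a0 R) g](saddC HG) (saddA HG); exact: id.
Qed.

End Final.

Theorem corollary5p4 (G : porderZmodType) (HG : divisible_toag G)
  (n : nat) (A : 'M[Smax G]_n.+1) (HA : TPD A)
  (Hsorted : forall i j : 'I_n.+1, (i <= j)%N -> sle (A j j) (A i i))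
  (k j : 'I_n.+1)
  (Hcol : signed_vec (fun i => sadj (sshift (A k k) A) i j) /\
          nonzero_vec (fun i => sadj (sshift (A k k) A) i j)) :
  j = k /\
  (forall v : 'I_n.+1 -> Smax G, seigenvector A (A k k) v ->
     exists lam : Smax G, forall i, v i = smul lam (sadj (sshift (A k k) A) i j)) /\
  simple_eigenvalue_TPD A (A k k).
Proof. exact: main_sec. Qed.
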